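(* Let $\mathcal W$ be a monotonic game on $[n]$ and $i\neq j$ players. Then the game $\hat{\mathcal W}$ obtained by imposing an asymmetric non-reciprocal strong YES-quarrel of $i$ against $j$ is quasi-monotonic (i.e. 1-monotonic).
   Context: Players are $[n]=\{1,\dots,n\}$. A binary voting game on $[n]$ is identified with its collection $\mathcal W\subseteq 2^{[n]}$ of winning sets ($S\in\mathcal W$ means the division in which exactly the members of $S$ vote YES has outcome YES). It is monotonic if $T\subseteq S$ and $T\in\mathcal W$ imply $S\in\mathcal W$. For an integer $k\ge0$, a game $\mathcal W$ is $k$-monotonic if for every $S\subseteq[n]$ with $S\notin\mathcal W$ and every proper subset $T\subsetneq S$ there exists $K$ with $|K|\le k$ such that $T\setminus K\notin\mathcal W$; quasi-monotonic means 1-monotonic. Asymmetric non-reciprocal strong YES-quarrel of $i$ against $j$: for every $S\subseteq[n]\setminus\{i,j\}$, $S\cup\{i,j\}\in\hat{\mathcal W}\iff S\cup\{j\}\in\mathcal W$; $S\cup\{i\}\in\hat{\mathcal W}\iff S\cup\{i\}\in\mathcal W$; $S\cup\{j\}\in\hat{\mathcal W}\iff S\cup\{j\}\in\mathcal W$; $S\in\hat{\mathcal W}\iff S\in\mathcal W$. *)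

(* Defs.v *)
(* Players [n] are modelled as 'I_n (i.e. {0,...,n-1});
   a game is its collection of winning sets, a {set {set 'I_n}}. *)
From mathcomp Require Import all_boot.
Set Implicit Arguments. Unset Strict Implicit. Unset Printing Implicit Defensive.

Definition game (n : nat) := {set {set 'I_n}}.

Definition monotonic (n : nat) (W : game n) : Prop :=
  forall S T : {set 'I_n}, T \subset S -> T \in W -> S \in W.

Definition k_monotonic (n k : nat) (W : game n) : Prop :=
  forall S : {set 'I_n}, S \notin W ->
  forall T : {set 'I_n}, T \proper S ->
  exists K : {set 'I_n}, #|K| <= k /\ T :\: K \notin W.

Definition quasi_monotonic (n : nat) (W : game n) : Prop := k_monotonic 1 W.

Definition asym_nonrecip_strong_yes_quarrel (n : nat) (i j : 'I_n)
    (W Wh : game n) : Prop :=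
  forall S : {set 'I_n}, i \notin S -> j \notin S ->
    [/\ (S :|: [set i; j] \in Wh) = (S :|: [set j] \in W),
        (S :|: [set i] \in Wh) = (S :|: [set i] \in W),
        (S :|: [set j] \in Wh) = (S :|: [set j] \in W) &
        (S \in Wh) = (S \in W)].

(* Main.v *)
Require Import Defs.
From mathcomp Require Import all_boot.

Lemma noti n (W Wh : game n) (i j : 'I_n) :
  i != j -> asym_nonrecip_strong_yes_quarrel i j W Wh ->
  forall X : {set 'I_n}, i \notin X -> (X \in Wh) = (X \in W).
Proof.
move=> ij Q X iX.
have iS : i \notin X :\ j by rewrite !inE negb_and iX orbT.
have jS : j \notin X :\ j by rewrite !inE eqxx.
case: (Q _ iS jS) => _ _ H3 H4.
case jX: (j \in X); last first.
  have E : X :\ j = X by apply/setP=> x; rewrite !inE; case: (x =P j) => // ->; rewrite jX.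
  by rewrite E in H4.
have E : (X :\ j) :|: [set j] = X by rewrite setUC setD1K.
by rewrite -{1}E -{2}E.
Qed.

Lemma bothij n (W Wh : game n) (i j : 'I_n) :
  i != j -> asym_nonrecip_strong_yes_quarrel i j W Wh ->
  forall X : {set 'I_n}, i \in X -> j \in X -> (X \in Wh) = (X :\ i \in W).
Proof.
move=> ij Q X iX jX.
pose S0 := X :\: [set i; j].
have iS : i \notin S0 by rewrite !inE eqxx.
have jS : j \notin S0 by rewrite !inE !eqxx ?orbT ?andbF.
case: (Q _ iS jS) => H1 _ _ _.
have E1 : X = S0 :|: [set i; j].
  apply/setP=> x; rewrite !inE; case: (x =P i) => [->|]; first by rewrite iX orbT.
  case: (x =P j) => [->|] /=; first by rewrite jX.
  by move=> _ _; rewrite orbF.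
have E2 : X :\ i = S0 :|: [set j].
  apply/setP=> x; rewrite !inE; case: (x =P i) => [->|] /=.
    by rewrite (negbTE ij).
  move=> _; case: (x =P j) => [->|] /=; first by [].
  by move=> _; rewrite orbF.
by rewrite E2 -H1 -E1.
Qed.

Theorem theorem11 (n : nat) (W Wh : game n) (i j : 'I_n) :
  i != j -> monotonic W ->
  asym_nonrecip_strong_yes_quarrel i j W Wh ->
  quasi_monotonic Wh.
Proof.
move=> ij M Q S SW T /properP [TS _].
exists [set i]; split; first by rewrite cards1.
have iT : i \notin T :\: [set i] by rewrite !inE eqxx.
rewrite (@noti _ W Wh i j ij Q _ iT).
apply/negP=> HT.
have sub : T :\: [set i] \subset S :\ i by apply: setSD.
case iS: (i \in S); last first.
  move: SW; rewrite (@noti _ W Wh i j ij Q _ (negbT iS)) => /negP; apply.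
  apply: (M _ _ _ HT); apply: subset_trans sub _; exact: subD1set.
case jS: (j \in S).
  move: SW; rewrite (@bothij _ W Wh i j ij Q _ iS jS) => /negP; apply; exact: (M _ _ sub HT).
have iS' : i \notin S :\ i by rewrite !inE eqxx.
have jS' : j \notin S :\ i by rewrite !inE jS andbF.
case: (Q _ iS' jS') => _ H2 _ _.
have E : (S :\ i) :|: [set i] = S by rewrite setUC setD1K.
move: SW; rewrite -E H2 E => /negP; apply.
apply: (M _ _ _ HT); apply: subset_trans sub _; exact: subD1set.
Qed.
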